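(* Let $G$ be a graph, $\ell\ge 1$, and let $B\subseteq V(G)$ be a mixed $(\ell-1)$-leaky forcing set of $G$. Let $L=L_1\cup L_2\cup L_3$ be a set of $k\ge\ell$ leaks, where $L_1$ is the set of vertex leaks, $L_2$ the set of edge leaks and $L_3$ the set of specified leaks in $L$. Then \[|L_1\setminus B^{[\infty]}_L|+|L_2-B^{[\infty]}_L|+|L_3-B^{[\infty]}_L|\le k-\ell,\] where for $S\subseteq V(G)$, $L_2-S=\{xy\in L_2: x\notin S,\ y\notin S\}$ and $L_3-S=\{x\to y\in L_3: x\notin S\}$.
   Context: All graphs are finite, simple and undirected. Zero forcing: a blue vertex $u$ with exactly one white neighbor $w$ may force $w$ (color it blue), written $u\to w$. A vertex leak is a vertex not allowed to perform any force. An edge leak is an edge $xy$ across which no force may be performed (neither $x\to y$ nor $y\to x$). A specified leak is an ordered pair $x\to y$ meaning $x$ (the tail) may not force $y$ (the head). A leak is any of these three kinds. $B$ is a mixed $\ell$-leaky forcing set if for every set of at most $\ell$ leaks (of any mix of kinds), exhaustively applying the forcing rule from initial blue set $B$ subject to all the leaks colors all of $V(G)$ blue. For a set $L$ of leaks, $B^{[\infty]}_L$ denotes the set of blue vertices obtained from $B$ after exhaustively applying the forcing rule subject to the leaks in $L$ (independent of the order of forces). *)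

(* Defs.v *)
From mathcomp Require Import all_boot.
Set Implicit Arguments. Unset Strict Implicit. Unset Printing Implicit Defensive.

(* A simple graph: vertex type T : finType, adjacency e : rel T,
   assumed symmetric and irreflexive in the theorem statement. *)

(* Leaks: a vertex leak v, an edge leak given as the unordered pair {x,y}
   (a 2-element set), or a specified leak x -> y given as the ordered pair. *)
Notation leak T := ((T + {set T}) + (T * T))%type.
Definition VL {T : finType} (v : T) : leak T := inl (inl v).
Definition EL {T : finType} (s : {set T}) : leak T := inl (inr s).
Definition SL {T : finType} (p : T * T) : leak T := inr p.

Definition valid_leak (T : finType) (e : rel T) (l : leak T) : bool :=
  match l with
  | inl (inl _) => true
  | inl (inr s) => [exists x, exists y, (s == [set x; y]) && e x y]
  | inr (x, y) => e x y
  end.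

Definition valid_leaks (T : finType) (e : rel T) (L : {set leak T}) : bool :=
  [forall l in L, valid_leak e l].

Definition can_force (T : finType) (e : rel T) (L : {set leak T})
    (X : {set T}) (u w : T) : bool :=
  [&& u \in X, w \notin X, e u w,
      [forall z, (e u z && (z \notin X)) ==> (z == w)],
      VL u \notin L, EL [set u; w] \notin L & SL (u, w) \notin L].

Definition force_step (T : finType) (e : rel T) (L : {set leak T})
    (X : {set T}) : {set T} :=
  X :|: [set w | [exists u, can_force e L X u w]].

(* B^[oo]_L : the set of blue vertices after exhaustively applying the
   forcing rule (the process stabilises after at most #|T| rounds). *)
Definition leaky_closure (T : finType) (e : rel T) (L : {set leak T})
    (B : {set T}) : {set T} :=
  iter #|T| (force_step e L) B.

Definition mixed_leaky_forcing (T : finType) (e : rel T) (l : nat)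
    (B : {set T}) : Prop :=
  forall L : {set leak T}, valid_leaks e L -> #|L| <= l ->
    leaky_closure e L B = [set: T].

(* Main.v *)
Require Import Defs.
From mathcomp Require Import all_boot zify.
Set Implicit Arguments.

Section Aux.
Variable (T : finType) (e : rel T).

Lemma fs_sub (L : {set leak T}) (X : {set T}) : X \subset force_step e L X.
Proof. exact: subsetUl. Qed.

Lemma fs_mono (L : {set leak T}) (X Y : {set T}) : X \subset Y -> force_step e L X \subset force_step e L Y.
Proof.
move=> sXY; apply/subsetP => w; rewrite !inE => /orP[wX|].
  by rewrite (subsetP sXY w wX).
case/existsP => u /and3P[uX wX /and5P[euw /forallP H l1 l2 l3]].
case wY: (w \in Y) => //=; apply/existsP; exists u; apply/and3P; split => //.
- exact: (subsetP sXY).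
- by rewrite wY.
- apply/and5P; split => //; apply/forallP => z; apply/implyP => /andP[euz zY].
  have := H z; rewrite euz /=; case zX: (z \in X) => //=.
  by rewrite (subsetP sXY z zX) in zY.
Qed.

Lemma closure_fix (L : {set leak T}) (B : {set T}) :
  force_step e L (leaky_closure e L B) = leaky_closure e L B.
Proof.
have P : forall n, (force_step e L (iter n (force_step e L) B) = iter n (force_step e L) B)
                 \/ n <= #|iter n (force_step e L) B|.
  elim=> [|n [IH|IH]]; first by right.
  - by left; rewrite /= IH.
  - case E: (force_step e L (iter n (force_step e L) B) == iter n (force_step e L) B).
      by left; rewrite /= (eqP E) (eqP E).
    right => /=.
    have pr : iter n (force_step e L) B \proper force_step e L (iter n (force_step e L) B).
      by rewrite properEneq eq_sym E fs_sub.
    by apply: leq_ltn_trans IH (proper_card pr).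
rewrite /leaky_closure; case: (P #|T|) => // H.
have E : iter #|T| (force_step e L) B = [set: T].
  by apply/eqP; rewrite eqEcard subsetT cardsT H.
by rewrite E; apply/eqP; rewrite eqEsubset subsetT fs_sub.
Qed.

Lemma closure_sub (L : {set leak T}) (B : {set T}) : B \subset leaky_closure e L B.
Proof.
rewrite /leaky_closure; elim: #|T| => [|n IH] //=.
exact: subset_trans IH (fs_sub _ _).
Qed.

End Aux.

Theorem lemma4p1 (T : finType) (e : rel T)
    (e_sym : symmetric e) (e_irr : irreflexive e)
    (l : nat) (B : {set T}) (L : {set leak T}) (k : nat) :
  1 <= l ->
  mixed_leaky_forcing e (l - 1) B ->
  valid_leaks e L ->
  #|L| = k ->
  l <= k ->
  let C := leaky_closure e L B in
  #|[set v : T | (VL v \in L) && (v \notin C)]|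
  + #|[set s : {set T} | (EL s \in L) && [disjoint s & C]]|
  + #|[set p : T * T | (SL p \in L) && (p.1 \notin C)]|
  <= k - l.
Proof.
move=> l1 mlf vL cL lk; rewrite /=; set C := leaky_closure e L B.
set S1 := [set v : T | _]; set S2 := [set s : {set T} | _]; set S3 := [set p : T * T | _].
pose bad (x : leak T) : bool :=
  match x with
  | inl (inl v) => v \notin C
  | inl (inr s) => [disjoint s & C]
  | inr p => p.1 \notin C
  end.
pose P := [set x | bad x].
pose L0 := L :\: P.
have sumle : #|S1| + #|S2| + #|S3| <= #|L :&: P|.
  have -> : #|S1| + #|S2| + #|S3| = #|VL @: S1 :|: EL @: S2 :|: SL @: S3|.
    rewrite !cardsU !card_imset; last 3 first.
    - by move=> ? ? [].
    - by move=> ? ? [].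
    - by move=> ? ? [].
    have -> : VL @: S1 :&: EL @: S2 = set0.
      by apply/setP => x; rewrite !inE; apply/negP => /andP[/imsetP[? _ ->] /imsetP[? _]].
    have -> : (VL @: S1 :|: EL @: S2) :&: SL @: S3 = set0.
      apply/setP => x; rewrite !inE; apply/negP => /andP[/orP[]/imsetP[? _ ->] /imsetP[? _]] //.
    by rewrite !cards0 !subn0.
  apply: subset_leq_card; apply/subsetP => x; rewrite !inE.
  case/orP => [/orP[]|] /imsetP[y]; rewrite inE => /andP[H1 H2] -> ; by rewrite H1 /= H2.
have fixC : force_step e L0 C = C.
  have fixL : force_step e L C = C := closure_fix e L B.
  rewrite -{2}fixL /force_step; congr (_ :|: _).
  apply/setP => w; rewrite !inE; apply: eq_existsb => u.
  rewrite /can_force; case uC: (u \in C) => //=.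
  rewrite /L0 !inE /bad /= uC /=.
  have -> : [disjoint [set u; w] & C] = false.
    apply/negbTE/negP => D.
    by have := disjointFr D (_ : u \in [set u; w]); rewrite uC !inE eqxx => /(_ isT).
  by rewrite /=.
have sub0 : leaky_closure e L0 B \subset C.
  rewrite /leaky_closure; elim: #|T| => [|n IH] /=; first exact: closure_sub.
  by rewrite -fixC; apply: fs_mono.
have := cardsID P L; rewrite cL => cLk.
case: (leqP (#|S1| + #|S2| + #|S3|) (k - l)) => // gt.
have vL0 : valid_leaks e L0.
  apply/forallP => x; apply/implyP; rewrite inE => /andP[_ xL].
  by move/forallP: vL => /(_ x) /implyP; apply.
have cL0 : #|L0| <= l - 1.
  rewrite /L0 -cLk in gt *; move: (#|L :&: P|) (#|L :\: P|) sumle gt => a b sumle gt.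
  move: (#|S1| + #|S2| + #|S3|) sumle gt lk l1 => c; lia.
have CT := mlf L0 vL0 cL0.
have CT' : C = [set: T].
  by apply/eqP; rewrite eqEsubset subsetT -CT sub0.
have E1 : S1 = set0 by apply/setP => v; rewrite !inE CT' inE andbF.
have E3 : S3 = set0 by apply/setP => v; rewrite !inE CT' inE andbF.
have E2 : S2 = set0.
  apply/setP => s; rewrite !inE CT'; apply/negP => /andP[sL].
  move/forallP: vL => /(_ (EL s)) /implyP /(_ sL) /existsP[x /existsP[y /andP[/eqP -> _]]].
  by move=> D; have := disjointFr D (_ : x \in [set x; y]); rewrite !inE eqxx => /(_ isT).
by rewrite E1 E2 E3 !cards0 in gt.
Qed.
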